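(* Let $0<\mu\le L$, $f\in\mathcal S^2_{\mu,L}(\mathbb R^n)$ with minimizer $x^*$, $\beta\in[0,1]$, $s>0$, and let $X=X(t)$ solve $$\ddot X+2\sqrt\mu\,\dot X+\beta\sqrt s\,\nabla^2 f(X)\dot X+(1+\sqrt{\mu s})\nabla f(X)=0.$$ Define $$\mathcal E_\beta(t)=(1+\sqrt{\mu s})\big(f(X)-f(x^* )\big)+\tfrac14\|\dot X\|^2+\tfrac14\big\|\dot X+2\sqrt\mu(X-x^* )+\beta\sqrt s\,\nabla f(X)\big\|^2.$$ Then $$\frac{d\mathcal E_\beta(t)}{dt}\le-\frac{\sqrt\mu}{4}\mathcal E_\beta(t)-\Delta_\beta,$$ where $$\Delta_\beta=\frac14\left(\frac{8\beta s\sqrt\mu-3s\beta^2\sqrt\mu}{4}\|\nabla f(X)\|^2+2\sqrt\mu\|\dot X\|^2+(\sqrt\mu+\mu\sqrt s)\big(f(X)-f(x^* )\big)\right).$$ In particular, $\frac{d\mathcal E_\beta(t)}{dt}\le-\frac{\sqrt\mu}{4}\mathcal E_\beta(t)$.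
   Context: $\mathcal S^2_{\mu,L}(\mathbb R^n)$ is the class of twice differentiable, $\mu$-strongly convex functions $f:\mathbb R^n\to\mathbb R$ (i.e. $f(y)\ge f(x)+\langle\nabla f(x),y-x\rangle+\frac\mu2\|y-x\|^2$) whose gradient is $L$-Lipschitz and whose Hessian is Lipschitz in Frobenius norm. *)

(* Defs.v *)
From HB Require Import structures.
From mathcomp Require Import all_boot all_order all_algebra.
From mathcomp Require Import all_classical all_reals all_analysis.
Set Implicit Arguments. Unset Strict Implicit. Unset Printing Implicit Defensive.
Import Order.TTheory GRing.Theory Num.Theory.
Import numFieldNormedType.Exports.
Local Open Scope ring_scope.

Section Defs.
Variables (R : realType) (n : nat).

(* Euclidean inner product and norm on R^n (the library norm on matrices is the sup norm). *)
Definition dotv (u v : 'cV[R]_n) : R := \sum_(i < n) u i 0 * v i 0.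
Definition enorm (u : 'cV[R]_n) : R := Num.sqrt (dotv u u).
Definition frob (A : 'M[R]_n) : R := Num.sqrt (\sum_(i < n) \sum_(j < n) A i j ^+ 2).

Definition ebase (i : 'I_n) : 'cV[R]_n := delta_mx i 0.

Definition grad (f : 'cV[R]_n -> R) (x : 'cV[R]_n) : 'cV[R]_n :=
  \col_(i < n) 'D_(ebase i) f x.

Definition hessian (f : 'cV[R]_n -> R) (x : 'cV[R]_n) : 'M[R]_n :=
  \matrix_(i < n, j < n) 'D_(ebase j) (fun y => grad f y i 0) x.

Definition S2 (mu L : R) (f : 'cV[R]_n -> R) : Prop :=
  [/\ (forall x, differentiable f x),
      (forall x, differentiable (grad f) x),
      (forall x y, f y >= f x + dotv (grad f x) (y - x) + mu / 2 * enorm (y - x) ^+ 2),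
      (forall x y, enorm (grad f x - grad f y) <= L * enorm (x - y)) &
      (exists M : R, forall x y, frob (hessian f x - hessian f y) <= M * enorm (x - y))].

End Defs.

(* Main.v *)
Require Import Defs.
From HB Require Import structures.
From mathcomp Require Import all_boot all_order all_algebra.
From mathcomp Require Import all_classical all_reals all_analysis.
From mathcomp Require Import ring lra.
Import Order.TTheory GRing.Theory Num.Theory.
Import numFieldNormedType.Exports.
Local Open Scope ring_scope.
Set Implicit Arguments.
Section H.
Context {R : realType} {n : nat}.
Implicit Types u v w : 'cV[R]_n.

Lemma dotvC u v : dotv u v = dotv v u.
Proof. by apply: eq_bigr => i _; rewrite mulrC. Qed.
Lemma dotvDl u v w : dotv (u + v) w = dotv u w + dotv v w.
Proof. by rewrite /dotv -big_split; apply: eq_bigr => i _; rewrite !mxE mulrDl. Qed.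
Lemma dotvZl (k : R) u v : dotv (k *: u) v = k * dotv u v.
Proof. by rewrite /dotv mulr_sumr; apply: eq_bigr => i _; rewrite !mxE mulrA. Qed.
Lemma dotvNl u v : dotv (- u) v = - dotv u v.
Proof. by rewrite -scaleN1r dotvZl mulN1r. Qed.
Lemma dotvBl u v w : dotv (u - v) w = dotv u w - dotv v w.
Proof. by rewrite dotvDl dotvNl. Qed.
Lemma dotvDr u v w : dotv w (u + v) = dotv w u + dotv w v.
Proof. by rewrite dotvC dotvDl !(dotvC w). Qed.
Lemma dotvZr (k : R) u v : dotv v (k *: u) = k * dotv v u.
Proof. by rewrite dotvC dotvZl dotvC. Qed.
Lemma dotvNr u v : dotv v (- u) = - dotv v u.
Proof. by rewrite dotvC dotvNl dotvC. Qed.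
Lemma dotvBr u v w : dotv w (u - v) = dotv w u - dotv w v.
Proof. by rewrite dotvDr dotvNr. Qed.
Lemma dotv0r v : dotv v 0 = 0.
Proof. by rewrite /dotv big1 // => i _; rewrite mxE mulr0. Qed.
Lemma dotv_ge0 v : 0 <= dotv v v.
Proof. by apply: sumr_ge0 => i _; rewrite -expr2 sqr_ge0. Qed.
Lemma dotv_eq0 v : dotv v v = 0 -> v = 0.
Proof.
move=> /eqP; rewrite psumr_eq0 => [/allP H|i _]; last by rewrite -expr2 sqr_ge0.
apply/matrixP => i j; rewrite (ord1 j) mxE.
have /H : i \in index_enum 'I_n by rewrite mem_index_enum.
by rewrite /= -expr2 sqrf_eq0 => /eqP.
Qed.
Lemma enorm_sq v : enorm v ^+ 2 = dotv v v.
Proof. by rewrite /enorm sqr_sqrtr // dotv_ge0. Qed.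

Lemma dotv3 (a b c : 'cV[R]_n) : dotv (a + b + c) (a + b + c) <= 6 * dotv a a + 2 * dotv b b + 3 * dotv c c.
Proof.
rewrite /dotv !mulr_sumr -!big_split /=; apply: ler_sum => i _; rewrite !mxE.
set x := a i 0; set y := b i 0; set z := c i 0.
have := sqr_ge0 (y - x - z); have := sqr_ge0 (2 * x - z); nra.
Qed.

Lemma vec_decomp v : v = \sum_(i < n) v i 0 *: ebase R i.
Proof.
rewrite {1}(matrix_sum_delta v); apply: eq_bigr => i _.
by rewrite big_ord1.
Qed.

Lemma grad_d (f : 'cV[R]_n -> R) x v : differentiable f x ->
  'd f x v = dotv (grad f x) v.
Proof.
move=> df; rewrite {1}(vec_decomp v) linear_sum /dotv; apply: eq_bigr => i _.
by rewrite linearZ /= -deriveE // mxE mulrC.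
Qed.

Lemma hess_d (f : 'cV[R]_n -> R) x v : differentiable (grad f) x ->
  'd (grad f) x v = hessian f x *m v.
Proof.
move=> df; rewrite {1}(vec_decomp v) linear_sum.
apply/matrixP => i j; rewrite (ord1 j) !mxE summxE; apply: eq_bigr => k _.
rewrite linearZ /= -deriveE // !mxE mulrC; congr (_ * _).
rewrite derive_mx ?mxE //; exact: diff_derivable.
Qed.

End H.
Section H2.
Context {R : realType} {n : nat}.

Lemma comp_derive (U : normedModType R) (F : 'cV[R]_n -> U) (Y : R -> 'cV[R]_n) t :
  differentiable F (Y t) -> derivable Y t 1 ->
  is_derive t 1 (F \o Y) ('d F (Y t) ('D_1 Y t)).
Proof.
move=> dF dY; have dY' : differentiable Y t by apply/derivable1_diffP.
have dc : differentiable (F \o Y) t by apply: differentiable_comp.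
split; first (apply/derivable1_diffP; exact: dc).
rewrite deriveE // diff_comp //=.
by rewrite (@deriveE R R _ Y t 1 dY').
Qed.

Lemma comp_derivable (Y : R -> 'cV[R]_n) t i :
  derivable Y t 1 -> is_derive t 1 (fun s => Y s i 0) ('D_1 Y t i 0).
Proof.
move=> dY; have := (derivable_mxP Y t 1).1 dY i 0 => di.
apply: DeriveDef => //; by rewrite derive_mx // mxE.
Qed.

Lemma dotv_derive (u w : R -> 'cV[R]_n) t :
  derivable u t 1 -> derivable w t 1 ->
  is_derive t 1 (fun s => dotv (u s) (w s)) (dotv ('D_1 u t) (w t) + dotv (u t) ('D_1 w t)).
Proof.
move=> du dw.
have H : forall i : 'I_n, is_derive t 1 (fun s => u s i 0 * w s i 0)
   ('D_1 u t i 0 * w t i 0 + u t i 0 * 'D_1 w t i 0).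
  move=> i; have := is_deriveM (comp_derivable i du) (comp_derivable i dw).
  move=> H.
  rewrite (_ : (fun s => u s i 0 * w s i 0) = (fun s => u s i 0) * (fun s => w s i 0)) //.
  case: H => d1 d2; split; first exact: d1.
  rewrite d2.
  by rewrite /= /GRing.scale /= addrC (mulrC (w t i 0)).
have := is_derive_sum H.
have -> : \sum_(i < n) (fun s => u s i 0 * w s i 0) = (fun s => dotv (u s) (w s)).
  by apply/funext => s; rewrite /dotv fct_sumE.
by rewrite /dotv -big_split.
Qed.

End H2.
Section H3.
Context {R : realType} {n : nat}.

Lemma lin_derive (v x : 'cV[R]_n) (h : R) : is_derive h 1 (fun s => s *: v + x) v.
Proof.
have D := is_diffD (is_diff_scalel h v) (is_diff_cst x h).
have dY := @ex_diff _ _ _ _ _ _ _ D.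
have E : (fun s : R => s *: v + x) = ( *:%R ^~ v) + cst x by [].
split; first by rewrite E; apply/derivable1_diffP.
by rewrite E deriveE // diff_val /= /GRing.add /= addr0 scale1r.
Qed.

End H3.
Arguments lin_derive {R n} v x h.

Section H4.
Context {R : realType} {n : nat}.

Lemma hess_pos (f : 'cV[R]_n -> R) (mu : R) x v :
  0 < mu -> (forall x, differentiable (grad f) x) ->
  (forall x y, f y >= f x + dotv (grad f x) (y - x) + mu / 2 * enorm (y - x) ^+ 2) ->
  0 <= dotv v (hessian f x *m v).
Proof.
move=> mu0 dg sc.
have [->|v0] := eqVneq v 0; first by rewrite mulmx0 dotv0r.
pose Y := fun s : R => s *: v + x.
pose phi := fun s => dotv (grad f (Y s)) v.
have dphi : forall s : R, is_derive s 1 phi (dotv ('d (grad f) (Y s) v) v).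
  move=> s.
  have hY := lin_derive v x s.
  have hu := comp_derive (dg (Y s)) (@ex_derive _ _ _ _ _ _ _ hY).
  rewrite derive_val in hu.
  have := dotv_derive (@ex_derive _ _ _ _ _ _ _ hu) (@derivable_cst R R _ v s 1).
  by rewrite derive_cst dotv0r addr0 derive_val.
have vv0 : 0 < dotv v v.
  by rewrite lt_neqAle dotv_ge0 andbT eq_sym; apply/negP => /eqP /dotv_eq0 /eqP; rewrite (negPf v0).
have mono : {in setT &, {homo phi : a b / a < b}}.
  move=> a b _ _ ab.
  have h1 := sc (Y a) (Y b); have h2 := sc (Y b) (Y a).
  have e1 : Y b - Y a = (b - a) *: v by rewrite /Y scalerBl opprD addrACA subrr addr0.
  have e2 : Y a - Y b = (a - b) *: v by rewrite /Y scalerBl opprD addrACA subrr addr0.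
  rewrite e1 e2 !enorm_sq !dotvZl !dotvZr in h1 h2.
  rewrite -/(phi a) -/(phi b) in h1 h2.
  have hba : 0 < b - a by rewrite subr_gt0.
  have : 0 < (b - a) * (phi b - phi a).
    have : mu * ((b - a) * ((b - a) * dotv v v)) <= (b - a) * (phi b - phi a) by nra.
    apply: lt_le_trans; apply: mulr_gt0 => //; apply: mulr_gt0 => //; exact: mulr_gt0.
  by rewrite pmulr_rgt0 // subr_gt0.
have := @incr_derive1_ge0 R phi setT 0.
rewrite interiorT derive1E.
have -> : 'D_1 phi 0 = dotv ('d (grad f) (Y 0) v) v by rewrite derive_val.
rewrite /Y scale0r add0r hess_d // dotvC; apply => //.
Qed.

End H4.
Lemma final_alg (R : realType) (rm rs be F vv vHv pg pp gg ww : R) :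
  0 < rm -> 0 < rs -> 0 <= be -> be <= 1 ->
  0 <= F -> 0 <= vv -> 0 <= vHv -> 0 <= pp -> 0 <= gg ->
  F + rm^+2 / 2 * pp <= pg ->
  ww <= 6 * vv + 8 * rm^+2 * pp + 3 * (be * rs)^+2 * gg ->
  - rm * vv - (be * rs) / 2 * vHv - (1 + rm * rs) * rm * pg - (1 + rm * rs) * (be * rs) / 2 * gg
  <= - (rm / 4) * ((1 + rm * rs) * F + 4^-1 * vv + 4^-1 * ww)
     - 4^-1 * ((8 * be * rs^+2 * rm - 3 * rs^+2 * be ^+ 2 * rm) / 4 * gg
       + 2 * rm * vv + (rm + rm^+2 * rs) * F).
Proof.
move=> hm hs hb0 hb1 hF hv hH hp hg hpg hw.
have h1 : rm * ww <= rm * (6 * vv + 8 * rm^+2 * pp + 3 * (be * rs)^+2 * gg) by rewrite ler_pM2l.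
have h2 : (1 + rm * rs) * rm * (F + rm^+2 / 2 * pp) <= (1 + rm * rs) * rm * pg.
  rewrite ler_pM2l //; apply: mulr_gt0 => //; apply: addr_gt0 => //; exact: mulr_gt0.
have h3 : 0 <= be * rs * vHv by apply: mulr_ge0 => //; apply: mulr_ge0 => //; exact: ltW.
have h4 : 0 <= be * rs * gg by apply: mulr_ge0 => //; apply: mulr_ge0 => //; exact: ltW.
have h5 : 0 <= rm * rs * rm * rm^+2 * pp.
  by repeat apply: mulr_ge0 => //; apply: ltW.
have h6 : 0 <= (1 + rm * rs) * rm * F.
  by repeat apply: mulr_ge0 => //; apply: ltW => //; apply: addr_gt0 => //; exact: mulr_gt0.
have h7 : 0 <= rm * vv by apply: mulr_ge0 => //; exact: ltW.
lra.
Qed.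

Unset Implicit Arguments.

Theorem lemma4p2 (R : realType) (n : nat) (mu L beta s : R)
  (f : 'cV[R]_n -> R) (xs : 'cV[R]_n) (X : R -> 'cV[R]_n) :
  0 < mu -> mu <= L -> S2 mu L f ->
  (forall y, f xs <= f y) ->
  0 <= beta <= 1 -> 0 < s ->
  (forall t, 0 < t -> derivable X t 1) ->
  (forall t, 0 < t -> derivable ('D_1 X) t 1) ->
  (forall t, 0 < t ->
     'D_1 ('D_1 X) t + (2 * Num.sqrt mu) *: 'D_1 X t
     + (beta * Num.sqrt s) *: (hessian f (X t) *m 'D_1 X t)
     + (1 + Num.sqrt (mu * s)) *: grad f (X t) = 0) ->
  let E := fun t => (1 + Num.sqrt (mu * s)) * (f (X t) - f xs)
      + 4^-1 * enorm ('D_1 X t) ^+ 2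
      + 4^-1 * enorm ('D_1 X t + (2 * Num.sqrt mu) *: (X t - xs)
                      + (beta * Num.sqrt s) *: grad f (X t)) ^+ 2 in
  let Delta := fun t => 4^-1 *
      ((8 * beta * s * Num.sqrt mu - 3 * s * beta ^+ 2 * Num.sqrt mu) / 4
         * enorm (grad f (X t)) ^+ 2
       + 2 * Num.sqrt mu * enorm ('D_1 X t) ^+ 2
       + (Num.sqrt mu + mu * Num.sqrt s) * (f (X t) - f xs)) in
  forall t, 0 < t ->
    derivable E t 1 /\
    'D_1 E t <= - (Num.sqrt mu / 4) * E t - Delta t /\
    'D_1 E t <= - (Num.sqrt mu / 4) * E t.
Proof.
move=> mu0 _ [df dg sc _ _] hmin /andP[b0 b1] s0 dX dV ode E Delta t t0.
pose m := Num.sqrt mu; pose rs := Num.sqrt s; pose c := 1 + Num.sqrt (mu * s).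
pose b := beta * rs.
pose V := 'D_1 X.
pose W := fun t => V t + (2 * m) *: (X t - xs) + b *: grad f (X t).
pose E' := fun t => c * (f (X t) - f xs) + 4^-1 * dotv (V t) (V t) + 4^-1 * dotv (W t) (W t).
have EE : E = E'.
  by apply/funext => u; rewrite /E /E' /W /V /c /b /m /rs !enorm_sq.
have hX := dX t t0; have hV := dV t t0.
have hfX := comp_derive (df (X t)) hX.
rewrite (grad_d ('D_1 X t) (df (X t))) in hfX.
have hgX := comp_derive (dg (X t)) hX.
rewrite (hess_d ('D_1 X t) (dg (X t))) in hgX.
have hW : is_derive t 1 W ('D_1 V t + (2 * m) *: V t + b *: (hessian f (X t) *m V t)).
  have H1 := is_deriveB (derivableP hX) (is_derive_cst xs t 1).
  have H2 := is_deriveZ (2 * m) H1.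
  have H3 := is_deriveD (derivableP hV) H2.
  have H4 := is_deriveD H3 (is_deriveZ b hgX).
  case: H4 => d1 d2; split; first exact: d1.
  by rewrite d2 subr0.
pose W' := 'D_1 V t + (2 * m) *: V t + b *: (hessian f (X t) *m V t).
have dW : derivable W t 1 := ex_derive (is_derive := hW).
have hE : is_derive t 1 E' (c * dotv (grad f (X t)) (V t)
    + 4^-1 * (dotv ('D_1 V t) (V t) + dotv (V t) ('D_1 V t))
    + 4^-1 * (dotv W' (W t) + dotv (W t) W')).
  have K1 := is_deriveZ c (is_deriveB hfX (is_derive_cst (f xs) t 1)).
  have K2 := is_deriveZ (4^-1) (dotv_derive hV hV).
  have K3 := is_deriveZ (4^-1) (dotv_derive dW dW).
  have K := is_deriveD (is_deriveD K1 K2) K3.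
  case: K => d1 d2; split; first exact: d1.
  rewrite d2 (derive_val (f := W)) subr0 /W' /V.
  reflexivity.
have ode' : W' + c *: grad f (X t) = 0 := ode t t0.
have eW : W' = - (c *: grad f (X t)) by apply/eqP; rewrite -addr_eq0 ode'.
have eA : 'D_1 V t = - ((2 * m) *: V t + b *: (hessian f (X t) *m V t) + c *: grad f (X t)).
  by apply/eqP; rewrite -addr_eq0 !addrA; apply/eqP; exact: (ode t t0).
rewrite EE; split; first exact: (ex_derive (is_derive := hE)).
rewrite (derive_val (is_derive := hE)) eW eA.
rewrite /E' /Delta !enorm_sq.
set ww := dotv (W t) (W t).
rewrite /W.
set P := X t - xs.
set g := grad f (X t).
set HV := hessian f (X t) *m V t.
have hH : 0 <= dotv (V t) HV by exact: (@hess_pos _ _ f mu (X t) (V t) mu0 dg sc).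
have hF : 0 <= f (X t) - f xs by rewrite subr_ge0.
have hpg : f (X t) - f xs + mu / 2 * dotv P P <= dotv g P.
  have := sc (X t) xs.
  have -> : xs - X t = - P by rewrite opprB.
  rewrite enorm_sq !(dotvNl, dotvNr) ?opprK -/g.
  lra.
have hw := dotv3 (V t) ((2 * m) *: P) (b *: g).
rewrite -/(W t) -/ww !(dotvZl, dotvZr) in hw.
rewrite !(dotvDl, dotvDr, dotvZl, dotvZr, dotvNl, dotvNr).
rewrite ?(dotvC (V t) g) ?(dotvC HV (V t)) ?(dotvC P g).
have hv := dotv_ge0 (V t).
have hp := dotv_ge0 P.
have hg := dotv_ge0 g.
rewrite /HV /V in hH hw hv hpg *.
have eP : dotv g P = dotv g (X t) - dotv g xs by rewrite -dotvBr.
rewrite eP in hpg.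
rewrite ?(dotvC (X t) g) ?(dotvC xs g).
have hmin0 : 0 <= mu by exact: ltW.
rewrite /c /m /b /rs sqrtrM // in hw *.
have rm0 : 0 < Num.sqrt mu by rewrite sqrtr_gt0.
have rs0 : 0 < Num.sqrt s by rewrite sqrtr_gt0.
have emu : mu = Num.sqrt mu ^+ 2 by rewrite sqr_sqrtr.
have es : s = Num.sqrt s ^+ 2 by rewrite sqr_sqrtr // ltW.
set rm := Num.sqrt mu in rm0 emu hw *.
set r := Num.sqrt s in rs0 es hw *.
rewrite {1}emu in hpg.
rewrite {}emu {}es.
have hw' : ww <= 6 * dotv ('D_1 X t) ('D_1 X t) + 8 * rm ^+ 2 * dotv P P + 3 * (beta * r) ^+ 2 * dotv g g.
  by apply: (le_trans hw); rewrite le_eqVlt; apply/orP; left; apply/eqP; ring.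
have key := @final_alg R _ _ _ _ _ _ _ _ _ _ rm0 rs0 b0 b1 hF hv hH hp hg hpg hw'.
have t1 : 0 <= beta * (8 - 3 * beta) * (r ^+ 2 * rm * dotv g g).
  apply: mulr_ge0; first by apply: mulr_ge0 => //; lra.
  by apply: mulr_ge0 => //; apply: mulr_ge0; [exact: sqr_ge0 | exact: ltW].
have t2 : 0 <= rm * dotv ('D_1 X t) ('D_1 X t) by apply: mulr_ge0 => //; exact: ltW.
have t3 : 0 <= (rm + rm ^+ 2 * r) * (f (X t) - f xs).
  apply: mulr_ge0 => //; apply: addr_ge0; first exact: ltW.
  by apply: mulr_ge0; [exact: sqr_ge0 | exact: ltW].
split; lra.
Qed.
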